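(* Let $S\ni h$ be a $2$-admissible polarized lattice of degree $h^2=8$, $\Delta$ a Weyl chamber for $\operatorname{rt}(S,h)$, $\bar P$ the corresponding closed fundamental polyhedron, and $\Gamma=\operatorname{Fn}_\Delta(S,h)$. Then the star $\operatorname{Star}(e)$ of $e$ is as follows: (1) if $e\in\Gamma$ is a line, $\operatorname{Star}(e)\cong\mathbf{A}_2\oplus a\mathbf{A}_1$ with $a\le3$, or $\operatorname{Star}(e)\cong a\mathbf{A}_1$ with $a\le8$; (2) if $e\in\Gamma$ is a line and $S\ni h$ is $3$-admissible, $\operatorname{Star}(e)\cong a\mathbf{A}_1$ with $a\le7$; (3) if $e\in\mathfrak{b}(\Delta)$ is an exceptional divisor, $\operatorname{Star}(e)\cong a\mathbf{A}_1$ with $a\le5$; (4) if $e\in\bar P$ is a $3$-isotropic vector, $\operatorname{Star}(e)\cong\mathbf{A}_2$ or $\operatorname{Star}(e)\cong a\mathbf{A}_1$ with $a\le9$.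
   Context: All lattices even; $(S,h)$ polarized: $S$ hyperbolic, $h^2>0$. $\operatorname{root}_n(S,h)=\{r: r^2=-2,\ r\cdot h=n\}$, $\operatorname{rt}(S,h)$ spanned by $\operatorname{root}_0(S,h)$. A Weyl chamber $\Delta$ has positive roots $P_\Delta$ and simple roots $\mathfrak{b}(\Delta)$ (exceptional divisors). $\bar P=\{v\in S\otimes\mathbb{R}: v^2\ge0,\ v\cdot h\ge0,\ v\cdot r\ge0 \text{ for } r\in P_\Delta \text{ and all roots } r \text{ with } r\cdot h>0\}$. The Fano graph $\Gamma=\operatorname{Fn}_\Delta(S,h)=\{l\in\operatorname{root}_1(S,h): l\cdot e\ge0\ \forall e\in\mathfrak{b}(\Delta)\}$ (elements: lines), with edges of multiplicity $l_1\cdot l_2$. $w$ is $m$-isotropic if $w^2=0$, $w\cdot h=m$; $2$-admissible: no $1$- or $2$-isotropic vector; $3$-admissible: in addition no $3$-isotropic vector. $\operatorname{Star}(e)=\{l\in\Gamma: l\cdot e=1\}$ as an induced subgraph of $\Gamma$. $a\mathbf{A}_1$ denotes the graph of $a$ isolated vertices, and $\mathbf{A}_2\oplus a\mathbf{A}_1$ the disjoint union of a single edge with $a$ isolated vertices. *)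

(* Defs.v *)
From HB Require Import structures.
From mathcomp Require Import all_boot all_order all_algebra.
Set Implicit Arguments. Unset Strict Implicit. Unset Printing Implicit Defensive.
Import Order.TTheory GRing.Theory Num.Theory.
Local Open Scope ring_scope.

(* A lattice of rank n is Z^n (column vectors) with Gram matrix G. *)
Section Lattice.
Variable n : nat.
Variable G : 'M[int]_n.

Definition vec := 'cV[int]_n.

Definition lform (x y : vec) : int := (x^T *m G *m y) ord0 ord0.

Definition formQ (x y : 'cV[rat]_n) : rat :=
  (x^T *m map_mx intr G *m y) ord0 ord0.

Definition toQ (x : vec) : 'cV[rat]_n := map_mx intr x.

Definition even_lattice : Prop :=
  G^T = G /\ forall i, (2 %| G i i)%Z.

(* hyperbolic: signature (1, n-1) (Sylvester: diagonalisation over Q) *)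
Definition hyperbolic : Prop :=
  exists P : 'M[rat]_n, P \in unitmx /\
    let D := P^T *m map_mx intr G *m P in
    (forall i j, i != j -> D i j = 0) /\
    exists i0, 0 < D i0 i0 /\ forall i, i != i0 -> D i i < 0.

Variable h : vec.

Definition is_root_n (k : int) (r : vec) : Prop := lform r r = -2 /\ lform r h = k.

Definition isotropic (m : int) (w : vec) : Prop := lform w w = 0 /\ lform w h = m.

Definition two_admissible : Prop :=
  forall w, ~ isotropic 1 w /\ ~ isotropic 2 w.

Definition three_admissible : Prop :=
  two_admissible /\ forall w, ~ isotropic 3 w.

(* A Weyl chamber Delta of rt(S,h) is represented by a generic rational
   vector v (not orthogonal to any root of root_0(S,h)); the chamber is the
   one containing (the projection to rt(S,h) (x) Q of) v. *)
Definition weyl_generic (v : 'cV[rat]_n) : Prop :=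
  forall r, is_root_n 0 r -> formQ (toQ r) v != 0.

Variable v : 'cV[rat]_n.

Definition pos_root (r : vec) : Prop := is_root_n 0 r /\ 0 < formQ (toQ r) v.

Definition simple_root (e : vec) : Prop :=
  pos_root e /\ ~ exists r1 r2, pos_root r1 /\ pos_root r2 /\ e = r1 + r2.

(* closed fundamental polyhedron Pbar, restricted to lattice vectors *)
Definition in_Pbar (w : vec) : Prop :=
  0 <= lform w w /\ 0 <= lform w h /\
  (forall r, pos_root r -> 0 <= lform w r) /\
  (forall r, lform r r = -2 -> 0 < lform r h -> 0 <= lform w r).

Definition is_line (l : vec) : Prop :=
  is_root_n 1 l /\ forall e, simple_root e -> 0 <= lform l e.

Definition in_star (e l : vec) : Prop := is_line l /\ lform l e = 1.

(* The induced subgraph on Star(e) (edge multiplicity l1.l2) is isomorphic to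
   the graph on 'I_m with edge multiplicities M. *)
Definition star_iso (e : vec) (m : nat) (M : 'I_m -> 'I_m -> int) : Prop :=
  exists f : 'I_m -> vec,
    injective f /\
    (forall l, in_star e l <-> exists i, f i = l) /\
    (forall i j, i != j -> lform (f i) (f j) = M i j).

End Lattice.

Definition aA1 (a : nat) : 'I_a -> 'I_a -> int := fun _ _ => 0.

Definition A2aA1 (a : nat) : 'I_a.+2 -> 'I_a.+2 -> int :=
  fun i j => if ((val i == 0%N) && (val j == 1%N)) || ((val i == 1%N) && (val j == 0%N))
             then 1 else 0.

Arguments aA1 a : clear implicits.
Arguments A2aA1 a : clear implicits.

(* Main.v *)
Require Import Defs.
From HB Require Import structures.
From mathcomp Require Import all_boot all_order all_algebra zify ring lra.
From Stdlib Require Import Classical.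
Set Implicit Arguments. Unset Strict Implicit. Unset Printing Implicit Defensive.
Import Order.TTheory GRing.Theory Num.Theory.
Local Open Scope ring_scope.


Section Bil.
Variable n : nat.
Variable G : 'M[int]_n.
Implicit Types x y z : 'cV[int]_n.

Lemma lformDl x y z : lform G (x + y) z = lform G x z + lform G y z.
Proof. by rewrite /lform linearD /= !mulmxDl mxE. Qed.
Lemma lformDr x y z : lform G z (x + y) = lform G z x + lform G z y.
Proof. by rewrite /lform mulmxDr mxE. Qed.
Lemma lformZl (a : int) x y : lform G (a *: x) y = a * lform G x y.
Proof. by rewrite /lform linearZ /= -!scalemxAl mxE. Qed.
Lemma lformZr (a : int) x y : lform G x (a *: y) = a * lform G x y.
Proof. by rewrite /lform -scalemxAr mxE. Qed.
Lemma lformNl x y : lform G (- x) y = - lform G x y.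
Proof. by rewrite -scaleN1r lformZl mulN1r. Qed.
Lemma lformNr x y : lform G x (- y) = - lform G x y.
Proof. by rewrite -scaleN1r lformZr mulN1r. Qed.
Lemma lformBl x y z : lform G (x - y) z = lform G x z - lform G y z.
Proof. by rewrite lformDl lformNl. Qed.
Lemma lformBr x y z : lform G z (x - y) = lform G z x - lform G z y.
Proof. by rewrite lformDr lformNr. Qed.
Lemma lform0l y : lform G 0 y = 0.
Proof. by rewrite /lform linear0 !mul0mx mxE. Qed.
Lemma lform0r y : lform G y 0 = 0.
Proof. by rewrite /lform mulmx0 mxE. Qed.
Lemma lformC : G^T = G -> forall x y, lform G x y = lform G y x.
Proof.
move=> sG x y; rewrite /lform.
have H (M : 'M[int]_1) : M ord0 ord0 = (M^T) ord0 ord0 by rewrite mxE.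
rewrite H.
by rewrite !trmx_mul trmxK sG mulmxA.
Qed.
Lemma lform_suml (I : Type) (s : seq I) (F : I -> 'cV[int]_n) y :
  lform G (\sum_(i <- s) F i) y = \sum_(i <- s) lform G (F i) y.
Proof.
elim: s => [|a s IH]; first by rewrite !big_nil lform0l.
by rewrite !big_cons lformDl IH.
Qed.
Lemma lform_sumr (I : Type) (s : seq I) (F : I -> 'cV[int]_n) y :
  lform G y (\sum_(i <- s) F i) = \sum_(i <- s) lform G y (F i).
Proof.
elim: s => [|a s IH]; first by rewrite !big_nil lform0r.
by rewrite !big_cons lformDr IH.
Qed.
End Bil.


Section Hodge.
Variable n : nat.
Variable G : 'M[int]_n.
Implicit Types X Y Z : 'cV[rat]_n.

Lemma formQDl X Y Z : formQ G (X + Y) Z = formQ G X Z + formQ G Y Z.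
Proof. by rewrite /formQ linearD /= !mulmxDl mxE. Qed.
Lemma formQDr X Y Z : formQ G Z (X + Y) = formQ G Z X + formQ G Z Y.
Proof. by rewrite /formQ mulmxDr mxE. Qed.
Lemma formQZl (a : rat) X Y : formQ G (a *: X) Y = a * formQ G X Y.
Proof. by rewrite /formQ linearZ /= -!scalemxAl mxE. Qed.
Lemma formQZr (a : rat) X Y : formQ G X (a *: Y) = a * formQ G X Y.
Proof. by rewrite /formQ -scalemxAr mxE. Qed.
Lemma formQNl X Y : formQ G (- X) Y = - formQ G X Y.
Proof. by rewrite -scaleN1r formQZl mulN1r. Qed.
Lemma formQNr X Y : formQ G X (- Y) = - formQ G X Y.
Proof. by rewrite -scaleN1r formQZr mulN1r. Qed.
Lemma formQC : G^T = G -> forall X Y, formQ G X Y = formQ G Y X.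
Proof.
move=> sG X Y; rewrite /formQ.
have H (M : 'M[rat]_1) : M ord0 ord0 = (M^T) ord0 ord0 by rewrite mxE.
by rewrite H !trmx_mul trmxK map_trmx sG mulmxA.
Qed.

Lemma lform_toQ x y : (lform G x y)%:~R = formQ G (toQ x) (toQ y).
Proof.
rewrite /lform /formQ /toQ map_trmx -!map_mxM.
by rewrite [RHS]mxE.
Qed.

Lemma toQ_inj0 (x : 'cV[int]_n) : toQ x = 0 -> x = 0.
Proof.
move=> /matrixP H; apply/matrixP => i j; move: (H i j).
by rewrite !mxE => /eqP; rewrite intr_eq0 => /eqP.
Qed.

Lemma diag_form (D : 'M[rat]_n) (hD : forall i j, i != j -> D i j = 0)
   (c d : 'cV[rat]_n) :
  (c^T *m D *m d) ord0 ord0 = \sum_i c i ord0 * D i i * d i ord0.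
Proof.
rewrite mxE; apply: eq_bigr => i _; rewrite mxE (bigD1 i) //= big1 ?addr0.
  by rewrite mxE.
by move=> j /negbTE ji; rewrite hD ?ji // mulr0.
Qed.

Hypothesis sG : G^T = G.
Hypothesis hyp : hyperbolic G.

Lemma hodgeQ (H Z : 'cV[rat]_n) : 0 < formQ G H H -> formQ G Z H = 0 ->
  formQ G Z Z <= 0 /\ (formQ G Z Z = 0 -> Z = 0).
Proof.
move=> HH ZH.
case: hyp => P [uP [hD [i0 [Dpos Dneg]]]].
set D := P^T *m map_mx intr G *m P in hD Dpos Dneg.
pose c (X : 'cV[rat]_n) := invmx P *m X.
have cE X : X = P *m c X by rewrite /c mulKVmx.
have cL a b X Y : c (a *: X - b *: Y) = a *: c X - b *: c Y.
  by rewrite /c mulmxDr mulmxN -!scalemxAr.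
clearbody c.
have fE X Y : formQ G X Y = \sum_i (c X) i ord0 * D i i * (c Y) i ord0.
  rewrite -diag_form // /D {1}(cE X) {1}(cE Y) /formQ trmx_mul.
  by rewrite !mulmxA.
have key X : (c X) i0 ord0 = 0 -> formQ G X X <= 0 /\ (formQ G X X = 0 -> X = 0).
  move=> X0.
  have tle i : (c X) i ord0 * D i i * (c X) i ord0 <= 0.
    case: (eqVneq i i0) => [->|ne]; first by rewrite X0 !mul0r.
    have := Dneg i ne; set a := D i i; set b := c X i ord0.
    move=> an; nra.
  rewrite fE; split; first exact: sumr_le0.
  move=> /eqP; rewrite -oppr_eq0 -sumrN psumr_eq0; last first.
    by move=> i _; rewrite oppr_ge0.
  move=> /allP al.
  rewrite (cE X); suff -> : c X = 0 by rewrite mulmx0.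
  apply/matrixP => i j; rewrite (ord1 j) [RHS]mxE.
  case: (eqVneq i i0) => [->//|ne].
  have := al i (mem_index_enum i); rewrite oppr_eq0 /= => /eqP.
  have := Dneg i ne; set a := D i i; set b := c X i ord0 => an E.
  have : a * (b * b) = 0 by rewrite -E; ring.
  move/eqP; rewrite mulf_eq0 (negbTE (ltr0_neq0 an)) /= mulf_eq0 orbb => /eqP //.
set b0 := c H i0 ord0; set z0 := c Z i0 ord0.
have b0n : b0 != 0.
  apply/eqP => b00; have [+ _] := key H b00; by rewrite leNgt HH.
set Y := b0 *: Z - z0 *: H.
have Y0 : c Y i0 ord0 = 0.
  by rewrite /Y cL !mxE -/b0 -/z0 mulrC subrr.
have HZ : formQ G H Z = 0 by rewrite formQC.
have YY : formQ G Y Y = b0 ^+ 2 * formQ G Z Z + z0 ^+ 2 * formQ G H H.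
  rewrite /Y !(formQDl, formQDr, formQNl, formQNr, formQZl, formQZr) ZH HZ; ring.
have [Yle Yeq] := key Y Y0.
have b2 : 0 < b0 ^+ 2 by rewrite lt_def sqrf_eq0 b0n sqr_ge0.
have z2 : 0 <= z0 ^+ 2 by rewrite sqr_ge0.
split; first nra.
move=> ZZ0.
have z00 : z0 = 0.
  have : z0 ^+ 2 * formQ G H H <= 0 by move: Yle; rewrite YY ZZ0 mulr0 add0r.
  move=> hle; apply/eqP; rewrite -sqrf_eq0; apply/eqP; nra.
have : Y = 0 by apply: Yeq; rewrite YY ZZ0 z00; ring.
rewrite /Y z00 scale0r subr0 => /eqP; rewrite scaler_eq0 (negbTE b0n) /= => /eqP //.
Qed.

Lemma hodgeZ (h z : 'cV[int]_n) : 0 < lform G h h -> lform G z h = 0 ->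
  lform G z z <= 0 /\ (lform G z z = 0 -> z = 0).
Proof.
move=> hh zh.
have := @hodgeQ (toQ h) (toQ z).
rewrite -!lform_toQ ltr0z zh hh => /(_ isT erefl) [le eq].
split; first by rewrite -(lerz0 rat).
move=> zz; apply: toQ_inj0; apply: eq; by rewrite zz.
Qed.

Lemma hodge8 (h w : 'cV[int]_n) : lform G h h = 8 ->
  8 * lform G w w <= lform G w h ^+ 2.
Proof.
move=> hh.
set z := 8 *: w - (lform G w h) *: h.
have hC := lformC sG.
have zh : lform G z h = 0.
  by rewrite /z lformBl !lformZl hh; ring.
have [le _] := hodgeZ (h:=h) (z:=z) ltac:(by rewrite hh) zh.
move: le; rewrite /z !(lformBl, lformBr, lformZl, lformZr) hh (hC h w).
move=> le; nia.
Qed.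
End Hodge.


Section Weyl.
Variable n : nat.
Variable G : 'M[int]_n.
Variable h : 'cV[int]_n.
Variable v : 'cV[rat]_n.

Lemma integral_v : exists (D : int) (V : 'cV[int]_n), 0 < D /\
  forall r, formQ G (toQ r) v * D%:~R = (lform G r V)%:~R.
Proof.
pose D := \prod_i denq (v i ord0).
pose V := \col_i (numq (v i ord0) * \prod_(j | j != i) denq (v j ord0)) : 'cV[int]_n.
exists D, V; split.
  by apply: prodr_gt0 => i _; exact: denq_gt0.
move=> r; rewrite lform_toQ.
have -> : toQ V = D%:~R *: v.
  apply/matrixP => i j; rewrite (ord1 j) !mxE rmorphM /= numqE rmorph_prod /=.
  rewrite /D rmorph_prod /= [in RHS](bigD1 i) //= -[v i 0]/(v i ord0); ring.
by rewrite formQZr mulrC.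
Qed.

Definition nonnegP (a : 'cV[int]_n) := forall r, pos_root G h v r -> 0 <= lform G a r.

Lemma line_nonneg l : is_line G h v l -> nonnegP l.
Proof.
move=> [_ Hl].
have [D [V [D0 DV]]] := integral_v.
have posV r : pos_root G h v r -> 0 < lform G r V.
  move=> [_ rp]; rewrite -(ltr0z rat) -DV; apply: mulr_gt0 rp _; by rewrite ltr0z.
suff H : forall k r, (absz (lform G r V) <= k)%N -> pos_root G h v r -> 0 <= lform G l r.
  by move=> r pr; apply: (H (absz (lform G r V))).
elim=> [|k IH] r rk pr.
  have := posV r pr; move: rk; lia.
case: (classic (simple_root G h v r)) => [sr|nsr]; first exact: Hl.
have [r1 [r2 [p1 [p2 E]]]] : exists r1 r2, pos_root G h v r1 /\ pos_root G h v r2 /\ r = r1 + r2.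
  apply: NNPP => ne; apply: nsr; split => //.
subst r; have := posV r1 p1; have := posV r2 p2.
move: rk; rewrite lformDl => rk q1 q2.
rewrite lformDr; apply: addr_ge0.
  apply: IH p1; lia.
apply: IH p2; lia.
Qed.

Hypothesis wg : weyl_generic G h v.

Lemma root_contra a b r : nonnegP a -> nonnegP b -> is_root_n G h 0 r ->
  lform G a r < 0 -> 0 < lform G b r -> False.
Proof.
move=> na nb rr ar br.
have := wg rr; rewrite neq_lt => /orP [neg|pos].
  have pr : pos_root G h v (- r).
    split.
      move: rr => [rr1 rr2]; split; rewrite ?lformNl ?lformNr ?rr1 ?rr2 ?opprK ?oppr0 //.
    by rewrite /toQ map_mxN formQNl oppr_gt0.
  have := nb _ pr; rewrite lformNr oppr_ge0; move: br; lia.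
have := na _ (conj rr pos); move: ar; lia.
Qed.
End Weyl.


Section Enum.
Variable T : eqType.
Variable P : T -> Prop.
Variable B : T -> T -> int.

Definition ISO m (M : 'I_m -> 'I_m -> int) :=
  exists f : 'I_m -> T, injective f /\ (forall l, P l <-> exists i, f i = l) /\
    (forall i j, i != j -> B (f i) (f j) = M i j).

Lemma maximal_list K :
  (forall s, uniq s -> (forall x, x \in s -> P x) -> (size s <= K)%N) ->
  exists s, uniq s /\ (forall x, P x <-> x \in s).
Proof.
move=> HK.
suff H : forall d s, (K - size s <= d)%N -> uniq s -> (forall x, x \in s -> P x) ->
  exists s', uniq s' /\ (forall x, P x <-> x \in s').
  by apply: (H K [::]) => //; lia.
elim=> [|d IH] s sd us Ps;
  (case: (classic (forall x, P x -> x \in s)) => [all|];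
  first by exists s; split; [exact: us| move=> x; split; [exact: all|exact: Ps]]).
{ move=> /not_all_ex_not [x] Hx; have [Px xs] := imply_to_and _ _ Hx.
  have := HK (x :: s); rewrite /= (negbTE (introN idP xs)) us /= => /(_ isT).
  have : forall y, y \in x :: s -> P y by move=> y; rewrite inE => /orP [/eqP ->|/Ps].
  move=> H /(_ H); move: sd; lia. }
move=> /not_all_ex_not [x] Hx; have [Px xs] := imply_to_and _ _ Hx.
have Hs : forall y, y \in x :: s -> P y by move=> y; rewrite inE => /orP [/eqP ->|/Ps].
have us' : uniq (x :: s) by rewrite /= (negbTE (introN idP xs)) us.
apply: (IH (x :: s)) => //.
have := HK (x :: s) us' Hs; move: sd => /=; lia.
Qed.

Hypothesis Bsym : forall x y, B x y = B y x.
Hypothesis Bself : forall x, P x -> B x x = -2.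
Hypothesis Bpair : forall x y, P x -> P y -> x <> y -> B x y = 0 \/ B x y = 1.
Hypothesis uniqE : forall x y z w, P x -> P y -> P z -> P w -> B x y = 1 -> B z w = 1 ->
  (z = x /\ w = y) \/ (z = y /\ w = x).

Variables K0 K1 : nat.
Hypothesis bound0 : forall s, uniq s -> (forall x, x \in s -> P x) ->
  (forall x y, x \in s -> y \in s -> x <> y -> B x y = 0) -> (size s <= K0)%N.
Hypothesis bound1 : forall x y s, P x -> P y -> B x y = 1 -> uniq s ->
  (forall z, z \in s -> P z /\ z <> x /\ z <> y) ->
  (forall z w, z \in s -> w \in s -> z <> w -> B z w = 0) ->
  (forall z, z \in s -> B x z = 0 /\ B y z = 0) -> (size s <= K1)%N.

Lemma neq_of_B1 x y : P x -> B x y = 1 -> x <> y.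
Proof. by move=> Px Bxy exy; subst; move: Bxy; rewrite Bself. Qed.

Lemma split_edge s x y : uniq s -> (forall z, z \in s -> P z) -> x \in s -> y \in s ->
  B x y = 1 ->
  let r := rem y (rem x s) in
  [/\ uniq (x :: y :: r), (forall z, z \in s = (z \in x :: y :: r)),
      size s = (size r).+2,
      (forall z, z \in r -> P z /\ z <> x /\ z <> y) &
      ((forall z w, z \in r -> w \in r -> z <> w -> B z w = 0) /\
      (forall z, z \in r -> B x z = 0 /\ B y z = 0))].
Proof.
move=> us Ps xs ys Bxy r.
have Px := Ps x xs; have Py := Ps y ys.
have nxy := neq_of_B1 Px Bxy.
have ux : uniq (rem x s) by exact: rem_uniq.
have yrx : y \in rem x s by rewrite (mem_rem_uniq _ us) inE /= ys andbT; apply/eqP => E; apply: nxy.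
have memr z : z \in r = [&& z != y, z != x & z \in s].
  by rewrite /r (mem_rem_uniq _ ux) inE /= (mem_rem_uniq _ us) inE.
have inr z : z \in r -> P z /\ z <> x /\ z <> y.
  by rewrite memr => /and3P [/eqP zy /eqP zx zs]; split; [exact: Ps|].
have ur : uniq r by exact: rem_uniq.
have Bz0 z w : P z -> P w -> z <> w -> (z <> x \/ w <> y) -> (z <> y \/ w <> x) -> B z w = 0.
  move=> Pz Pw zw c1 c2; case: (Bpair Pz Pw zw) => // B1.
  by case: (uniqE Px Py Pz Pw Bxy B1) => [[E1 E2]|[E1 E2]]; [case: c1|case: c2].
split.
- rewrite /= ur andbT inE negb_or !memr !eqxx /= !andbF /= !andbT; apply/eqP; exact: nxy.
- move=> z; rewrite !inE memr.
  case: (eqVneq z x) => [->|zx]; first by rewrite xs.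
  by case: (eqVneq z y) => [->|zy] //=; rewrite ys.
- rewrite /r; have s1 := size_rem xs; have s2 := size_rem yrx.
  have p1 : (0 < size (rem x s))%N by case: (rem x s) yrx.
  have p2 : (0 < size s)%N by case: (s) xs.
  rewrite s2 s1; move: p1; rewrite s1; lia.
- exact: inr.
split.
- move=> z w zr wr zw; have [Pz [zx zy]] := inr z zr; have [Pw [wx wy]] := inr w wr.
  exact: (Bz0 _ _ Pz Pw zw (or_introl zx) (or_introl zy)).
- move=> z zr; have [Pz [zx zy]] := inr z zr; split.
    exact: (Bz0 _ _ Px Pz (fun E => zx (esym E)) (or_intror zy) (or_introl nxy)).
  exact: (Bz0 _ _ Py Pz (fun E => zy (esym E)) (or_intror zy) (or_intror zx)).
Qed.

Lemma iso_of_list (s : seq T) : uniq s -> (forall l, P l <-> l \in s) ->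
  exists f : 'I_(size s) -> T, injective f /\ (forall l, P l <-> exists i, f i = l) /\
     (forall x0 i, f i = nth x0 s i).
Proof.
move=> us Hs.
have fn x0 (i : 'I_(size s)) : tnth (in_tuple s) i = nth x0 s i by rewrite (tnth_nth x0).
exists (fun i => tnth (in_tuple s) i); split; [|split].
- move=> i j; have [x0 _] : exists x0 : T, True := ex_intro _ (tnth (in_tuple s) i) I.
  rewrite (fn x0 i) (fn x0 j) => /eqP.
  by rewrite nth_uniq // => /eqP E; apply: val_inj.
- move=> l; split.
    move=> /Hs ls; exists (Ordinal (etrans (index_mem l s) ls)).
    by rewrite (fn l) /= nth_index.
  move=> [i <-]; apply/Hs; have [x0 _] : exists x0 : T, True := ex_intro _ (tnth (in_tuple s) i) I.
  by rewrite (fn x0) mem_nth.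
- by move=> x0 i; rewrite (fn x0).
Qed.

Lemma star_enum :
  (exists a : nat, (a <= K1)%N /\ ISO (A2aA1 a)) \/
  (exists a : nat, (a <= K0)%N /\ ISO (aA1 a)).
Proof.
have bnd : forall s, uniq s -> (forall x, x \in s -> P x) -> (size s <= K0 + K1 + 2)%N.
  move=> s us Ps.
  case: (classic (exists x y, x \in s /\ y \in s /\ B x y = 1)) => [[x [y [xs [ys Bxy]]]]|ne].
    have [_ _ sz inr [pw orth]] := split_edge us Ps xs ys Bxy.
    have Px := Ps x xs; have Py := Ps y ys.
    have := bound1 Px Py Bxy (rem_uniq _ (rem_uniq _ us)) inr pw orth.
    rewrite sz; lia.
  have : (size s <= K0)%N.
    apply: bound0 => // x y xs ys xy.
    case: (Bpair (Ps x xs) (Ps y ys) xy) => // B1; case: ne; by exists x, y.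
  lia.
have [s [us Hs]] := maximal_list bnd.
have Ps : forall x, x \in s -> P x by move=> x /Hs.
case: (classic (exists x y, x \in s /\ y \in s /\ B x y = 1)) => [[x [y [xs [ys Bxy]]]]|ne].
  left.
  have [us' mem' sz inr [pw orth]] := split_edge us Ps xs ys Bxy.
  set r := rem y (rem x s) in us' mem' sz inr pw orth.
  have Px := Ps x xs; have Py := Ps y ys.
  exists (size r); split; first exact: bound1 Px Py Bxy (rem_uniq _ (rem_uniq _ us)) inr pw orth.
  have Hs' : forall l, P l <-> l \in x :: y :: r by move=> l; rewrite -mem'.
  have [f [fi [fP fn]]] := iso_of_list us' Hs'.
  exists f; split => //; split => //.
  have f0 : f ord0 = x by rewrite (fn x).
  have f1 : f (lift ord0 ord0) = y by rewrite (fn x).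
  have fPi : forall i, P (f i) by move=> i; apply/fP; exists i.
  move=> i j ij; rewrite /A2aA1.
  case: ifP => [/orP [/andP [/eqP i0 /eqP j1]|/andP [/eqP i1 /eqP j0]]|nc].
  - have -> : i = ord0 by apply: val_inj.
    have -> : j = lift ord0 ord0 by apply: val_inj.
    by rewrite f0 f1.
  - have -> : i = lift ord0 ord0 by apply: val_inj.
    have -> : j = ord0 by apply: val_inj.
    by rewrite f0 f1 Bsym.
  - have fij : f i <> f j by move=> E; move: ij; rewrite (fi _ _ E) eqxx.
    case: (Bpair (fPi i) (fPi j) fij) => // B1.
    exfalso; move: nc.
    case: (uniqE Px Py (fPi i) (fPi j) Bxy B1) => [[E1 E2]|[E1 E2]].
      rewrite -f0 in E1; rewrite -f1 in E2.
      by rewrite (fi _ _ E1) (fi _ _ E2).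
    rewrite -f1 in E1; rewrite -f0 in E2.
    by rewrite (fi _ _ E1) (fi _ _ E2).
right.
have [f [fi [fP fn]]] := iso_of_list us Hs.
exists (size s); split.
  apply: bound0 => // x y xs ys xy.
  case: (Bpair (Ps x xs) (Ps y ys) xy) => // B1; case: ne; by exists x, y.
exists f; split => //; split => //.
have fPi : forall i, P (f i) by move=> i; apply/fP; exists i.
move=> i j ij; rewrite /aA1.
have fij : f i <> f j by move=> E; move: ij; rewrite (fi _ _ E) eqxx.
case: (Bpair (fPi i) (fPi j) fij) => // B1.
case: ne; exists (f i), (f j); split; [|split] => //; by apply/Hs.
Qed.
End Enum.


Ltac lf_expand := rewrite ?(lformDl, lformDr, lformBl, lformBr, lformNl, lformNr, lformZl, lformZr).

Ltac lf_subst sG := repeat match goal with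
 | H : lform _ ?a ?b = _ |- context [lform _ ?a ?b] => rewrite H
 | H : lform _ ?a ?b = _ |- context [lform _ ?b ?a] => rewrite (lformC sG b a) H
 end.

Section Geo.
Variable n : nat.
Variable G : 'M[int]_n.
Variable h : 'cV[int]_n.
Variable v : 'cV[rat]_n.
Hypothesis sG : G^T = G.
Hypothesis hyp : hyperbolic G.
Hypothesis hh : lform G h h = 8.
Hypothesis adm : two_admissible G h.
Hypothesis wg : weyl_generic G h v.

Local Notation lf := (lform G).

Lemma H8 w : 8 * lf w w <= lf w h ^+ 2.
Proof. exact: hodge8. Qed.

Lemma no_iso1 w : lf w w = 0 -> lf w h = 1 -> False.
Proof. by move=> a b; case: (adm w) => [c _]; apply: c. Qed.
Lemma no_iso2 w : lf w w = 0 -> lf w h = 2 -> False.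
Proof. by move=> a b; case: (adm w) => [_ c]; apply: c. Qed.

Lemma lines_pair l1 l2 : is_line G h v l1 -> is_line G h v l2 -> l1 <> l2 ->
  lf l1 l2 = 0 \/ lf l1 l2 = 1.
Proof.
move=> L1 L2 ne.
have N1 := line_nonneg L1; have N2 := line_nonneg L2.
case: L1 => [[s1 d1] _]; case: L2 => [[s2 d2] _].
set k := lf l1 l2.
have kk : lf l2 l1 = k by rewrite lformC.
have up : k <= 2.
  have := H8 (l1 + l2); lf_expand; rewrite s1 s2 d1 d2 kk -/k; nia.
have k2 : k != 2.
  apply/eqP => k2; apply: (no_iso2 (w := l1 + l2)); lf_expand; rewrite ?s1 ?s2 ?d1 ?d2 ?kk -/k ?k2 //.
have [le eq] := hodgeZ sG hyp (h := h) (z := l1 - l2) ltac:(by rewrite hh)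
   ltac:(by lf_expand; rewrite d1 d2 subrr).
move: le eq; lf_expand; rewrite s1 s2 kk -/k => le eq.
have lo : -2 <= k by lia.
have km2 : k != -2.
  apply/eqP => km; apply: ne; apply/eqP; rewrite -subr_eq0; apply/eqP; apply: eq.
  rewrite km; lia.
have km1 : k != -1.
  apply/eqP => km.
  apply: (root_contra wg N1 N2 (r := l1 - l2)).
  - split; lf_expand; rewrite ?s1 ?s2 ?kk -/k ?d1 ?d2 ?km //; lia.
  - lf_expand; rewrite s1 -/k km; lia.
  - lf_expand; rewrite s2 kk km; lia.
move: up k2 km2 km1 lo; lia.
Qed.

Lemma sumc (t : seq 'cV[int]_n) (F : 'cV[int]_n -> int) c :
  (forall z, z \in t -> F z = c) -> \sum_(z <- t) F z = c * (size t)%:Z.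
Proof.
elim: t => [|a t IH] H; first by rewrite big_nil mulr0.
rewrite big_cons H ?mem_head // IH => [|z zt]; last by apply: H; rewrite in_cons zt orbT.
rewrite /=; lia.
Qed.

Lemma sum_lin (t : seq 'cV[int]_n) y c : (forall z, z \in t -> lf z y = c) ->
  lf (\sum_(z <- t) z) y = c * (size t)%:Z.
Proof. by move=> H; rewrite lform_suml; apply: sumc. Qed.

Lemma sum_mem (t : seq 'cV[int]_n) z : uniq t -> z \in t ->
  (forall w, w \in t -> w <> z -> lf w z = 0) -> lf (\sum_(w <- t) w) z = lf z z.
Proof.
move=> ut zt H; rewrite lform_suml (bigD1_seq z) //= big1_seq ?addr0 //.
by move=> w /andP [/eqP ne wt]; apply: H.
Qed.

Lemma sum_self (t : seq 'cV[int]_n) : uniq t -> (forall z, z \in t -> lf z z = -2) ->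
  (forall z w, z \in t -> w \in t -> z <> w -> lf z w = 0) ->
  lf (\sum_(w <- t) w) (\sum_(w <- t) w) = -2 * (size t)%:Z.
Proof.
move=> ut H2 H0; rewrite lform_suml; apply: sumc => z zt.
rewrite lformC // sum_mem //; first exact: H2.
by move=> w wt wz; apply: H0.
Qed.

Lemma take_facts (s : seq 'cV[int]_n) k : uniq s -> (k <= size s)%N ->
  [/\ uniq (take k s), size (take k s) = k & (forall z, z \in take k s -> z \in s)].
Proof.
move=> us ks; split; first exact: take_uniq.
  exact: size_takel.
by move=> z; apply: mem_take.
Qed.

Definition Pst e l := in_star G h v e l.

Lemma star_self e x : Pst e x -> lf x x = -2.
Proof. by case=> [[[]]]. Qed.

Lemma star_pair e x y : Pst e x -> Pst e y -> x <> y -> lf x y = 0 \/ lf x y = 1.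
Proof. by move=> [Lx _] [Ly _]; apply: lines_pair. Qed.

Lemma big_list e (s : seq 'cV[int]_n) k : uniq s ->
  (forall x, x \in s -> Pst e x) ->
  (forall x y, x \in s -> y \in s -> x <> y -> lf x y = 0) -> (k <= size s)%N ->
  exists t : seq 'cV[int]_n, [/\ uniq t, size t = k, (forall x, x \in t -> Pst e x),
     (forall x y, x \in t -> y \in t -> x <> y -> lf x y = 0) & (forall x, x \in t -> x \in s)].
Proof.
move=> us Ps pw ks; have [ut st mt] := take_facts us ks.
exists (take k s); split => //.
- by move=> x /mt /Ps.
- by move=> x y /mt xs /mt ys; apply: pw.
Qed.

Lemma star_sum e (t : seq 'cV[int]_n) k : uniq t -> size t = k -> (forall x, x \in t -> Pst e x) ->
  (forall x y, x \in t -> y \in t -> x <> y -> lf x y = 0) ->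
  let S := \sum_(w <- t) w in
  [/\ lf S S = -2 * k%:Z, lf S h = k%:Z & lf S e = k%:Z].
Proof.
move=> ut st Pt pw S; rewrite -st; split.
- by apply: sum_self => // z /Pt; apply: star_self.
- by rewrite (@sum_lin _ _ 1) ?mul1r // => z /Pt [[[_ ->]]].
- by rewrite (@sum_lin _ _ 1) ?mul1r // => z /Pt [_ ->].
Qed.

Section Part3.
Variable e : 'cV[int]_n.
Hypothesis ee : lf e e = -2.
Hypothesis eh : lf e h = 0.

Lemma p3_noedge x y : Pst e x -> Pst e y -> lf x y = 1 -> False.
Proof.
move=> [[[sx dx] _] ex] [[[sy dy] _] ey] xy.
apply: (no_iso2 (w := e + x + y)); lf_expand; lf_subst sG; lia.
Qed.

Lemma p3_bound0 s : uniq s -> (forall x, x \in s -> Pst e x) ->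
  (forall x y, x \in s -> y \in s -> x <> y -> lf x y = 0) -> (size s <= 5)%N.
Proof.
move=> us Ps pw; rewrite leqNgt; apply/negP => big.
have [t [ut st Pt pt _]] := big_list us Ps pw big.
have [SS Sh Se] := star_sum ut st Pt pt.
have := H8 ((3 : int) *: e + \sum_(w <- t) w).
lf_expand; lf_subst sG; lia.
Qed.
End Part3.

Section Part2.
Variable e : 'cV[int]_n.
Hypothesis ee : lf e e = -2.
Hypothesis eh : lf e h = 1.
Hypothesis adm3 : forall w, ~ isotropic G h 3 w.

Lemma p2_noedge x y : Pst e x -> Pst e y -> lf x y = 1 -> False.
Proof.
move=> [[[sx dx] _] ex] [[[sy dy] _] ey] xy.
apply: (adm3 (w := e + x + y)); split; lf_expand; lf_subst sG; lia.
Qed.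

Lemma p2_bound0 s : uniq s -> (forall x, x \in s -> Pst e x) ->
  (forall x y, x \in s -> y \in s -> x <> y -> lf x y = 0) -> (size s <= 7)%N.
Proof.
move=> us Ps pw; rewrite leqNgt; apply/negP => big.
have [t [ut st Pt pt _]] := big_list us Ps pw big.
have [SS Sh Se] := star_sum ut st Pt pt.
apply: (adm3 (w := - h + (3 : int) *: e + \sum_(w <- t) w)); split;
lf_expand; lf_subst sG; lia.
Qed.
End Part2.

Section Part1.
Variable e : 'cV[int]_n.
Hypothesis Le : is_line G h v e.
Let ee : lf e e = -2. Proof. by case: Le => [[]]. Qed.
Let eh : lf e h = 1. Proof. by case: Le => [[]]. Qed.

Lemma p1_V x y z : Pst e x -> Pst e y -> Pst e z -> lf x y = 1 -> lf x z = 1 -> y <> z -> False.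
Proof.
move=> Px Py Pz xy xz yz.
have := star_pair Py Pz yz.
move: Px Py Pz => [[[sx dx] _] ex] [[[sy dy] _] ey] [[[sz dz] _] ez].
have ee' := ee; have eh' := eh.
case=> yz'.
  apply: (no_iso2 (w := h - (2 : int) *: e - (2 : int) *: x - y - z)); lf_expand; lf_subst sG; lia.
have := H8 ((2 : int) *: e + (2 : int) *: x + y + z); lf_expand; lf_subst sG; lia.
Qed.

Lemma p1_disj x y z w : Pst e x -> Pst e y -> Pst e z -> Pst e w -> lf x y = 1 -> lf z w = 1 ->
  lf x z = 0 -> lf x w = 0 -> lf y z = 0 -> lf y w = 0 -> False.
Proof.
move=> [[[sx dx] _] ex] [[[sy dy] _] ey] [[[sz dz] _] ez] [[[sw dw] _] ew] xy zw xz xw yz yw.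
have ee' := ee; have eh' := eh.
apply: (no_iso2 (w := h - (2 : int) *: e - x - y - z - w)); lf_expand; lf_subst sG; lia.
Qed.

Lemma p1_bound0 s : uniq s -> (forall x, x \in s -> Pst e x) ->
  (forall x y, x \in s -> y \in s -> x <> y -> lf x y = 0) -> (size s <= 8)%N.
Proof.
move=> us Ps pw; rewrite leqNgt; apply/negP => big.
have [t [ut st Pt pt _]] := big_list us Ps pw big.
have [SS Sh Se] := star_sum ut st Pt pt.
have ee' := ee; have eh' := eh.
have := H8 ((4 : int) *: e + \sum_(w <- t) w).
lf_expand; lf_subst sG; lia.
Qed.

Lemma p1_bound1 x y s : Pst e x -> Pst e y -> lf x y = 1 -> uniq s ->
  (forall z, z \in s -> Pst e z /\ z <> x /\ z <> y) ->
  (forall z w, z \in s -> w \in s -> z <> w -> lf z w = 0) ->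
  (forall z, z \in s -> lf x z = 0 /\ lf y z = 0) -> (size s <= 3)%N.
Proof.
move=> Px Py xy us Ps pw orth; rewrite leqNgt; apply/negP => big.
have Ps' : forall z, z \in s -> Pst e z by move=> z /Ps [].
have [t [ut st Pt pt mt]] := big_list us Ps' pw big.
have [SS Sh Se] := star_sum ut st Pt pt.
have [z1 z1t] : exists z1, z1 \in t by case: t st {ut Pt pt mt SS Sh Se} => // a t _; exists a; exact: mem_head.
have Sz1 : lf (\sum_(w <- t) w) z1 = -2.
  rewrite sum_mem //; first by apply: (star_self (Pt _ z1t)).
  by move=> w wt wz; apply: pt.
have Sx : lf (\sum_(w <- t) w) x = 0.
  rewrite (@sum_lin _ _ 0) ?mul0r // => z /mt zs; rewrite lformC //; by case: (orth z zs).
have Sy : lf (\sum_(w <- t) w) y = 0.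
  rewrite (@sum_lin _ _ 0) ?mul0r // => z /mt zs; rewrite lformC //; by case: (orth z zs).
have [L1 e1] := Pt z1 z1t.
have N1 := line_nonneg L1; have Ne := line_nonneg Le.
move: L1 => [[s1 d1] _].
move: Px Py => [[[sx dx] _] ex] [[[sy dy] _] ey].
have ee' := ee; have eh' := eh.
have [xz1 yz1] := orth z1 (mt _ z1t).
set S := \sum_(w <- t) w in SS Sh Se Sz1 Sx Sy.
apply: (root_contra wg N1 Ne (r := - h + (2 : int) *: e + x + y + S)).
- split; lf_expand; lf_subst sG; lia.
- lf_expand; lf_subst sG; lia.
- lf_expand; lf_subst sG; lia.
Qed.
End Part1.

Section Part4.
Variable e : 'cV[int]_n.
Hypothesis ee : lf e e = 0.
Hypothesis eh : lf e h = 3.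
Hypothesis Ne : nonnegP G h v e.

Lemma p4_third x y z : Pst e x -> Pst e y -> Pst e z -> lf x y = 1 -> z <> x -> z <> y -> False.
Proof.
move=> Px Py Pz xy zx zy.
have := star_pair Px Pz (nesym zx); have := star_pair Py Pz (nesym zy).
have [Lz _] := Pz; have Nz := line_nonneg Lz.
move: Px Py Pz => [[[sx dx] _] ex] [[[sy dy] _] ey] [[[sz dz] _] ez].
case=> t2; case=> t1.
- apply: (root_contra wg Nz Ne (r := h - (2 : int) *: e - x - y)).
  + split; lf_expand; lf_subst sG; lia.
  + lf_expand; lf_subst sG; lia.
  + lf_expand; lf_subst sG; lia.
- apply: (no_iso2 (w := h - e - x - y - z)); lf_expand; lf_subst sG; lia.
- apply: (no_iso2 (w := h - e - x - y - z)); lf_expand; lf_subst sG; lia.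
- have := H8 (e + x + y + z); lf_expand; lf_subst sG; lia.
Qed.

Lemma p4_bound0 s : uniq s -> (forall x, x \in s -> Pst e x) ->
  (forall x y, x \in s -> y \in s -> x <> y -> lf x y = 0) -> (size s <= 9)%N.
Proof.
move=> us Ps pw; rewrite leqNgt; apply/negP => big.
have [t [ut st Pt pt _]] := big_list us Ps pw big.
have [SS Sh Se] := star_sum ut st Pt pt.
have := H8 ((5 : int) *: e + \sum_(w <- t) w).
lf_expand; lf_subst sG; lia.
Qed.
End Part4.

Lemma edge_neq e x y : Pst e x -> lf x y = 1 -> x <> y.
Proof. by move=> Px xy E; subst; move: xy; rewrite (star_self Px). Qed.

Lemma noedge_aA1 e K0 :
  (forall x y, Pst e x -> Pst e y -> lf x y = 1 -> False) ->
  (forall s, uniq s -> (forall x, x \in s -> Pst e x) ->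
    (forall x y, x \in s -> y \in s -> x <> y -> lf x y = 0) -> (size s <= K0)%N) ->
  exists a : nat, (a <= K0)%N /\ star_iso G h v e (aA1 a).
Proof.
move=> ne b0.
have := @star_enum _ (Pst e) lf (lformC sG) (@star_self e) (@star_pair e)
  ltac:(by move=> x y z w Px Py _ _ xy; case: (ne x y Px Py xy)) K0 0%N b0
  ltac:(by move=> x y s Px Py xy; case: (ne x y Px Py xy)).
case=> [[a [_ [f [fi [fP fB]]]]]|//].
have := fB ord0 (lift ord0 ord0) isT; rewrite /A2aA1 /= => B1.
have P0 : Pst e (f ord0) by apply/fP; exists ord0.
have P1 : Pst e (f (lift ord0 ord0)) by apply/fP; exists (lift ord0 ord0).
by case: (ne _ _ P0 P1 B1).
Qed.

Lemma all_parts :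
  (forall e, is_line G h v e ->
     (exists a : nat, (a <= 3)%N /\ star_iso G h v e (A2aA1 a)) \/
     (exists a : nat, (a <= 8)%N /\ star_iso G h v e (aA1 a))) /\
  (three_admissible G h -> forall e, is_line G h v e ->
     exists a : nat, (a <= 7)%N /\ star_iso G h v e (aA1 a)) /\
  (forall e, simple_root G h v e ->
     exists a : nat, (a <= 5)%N /\ star_iso G h v e (aA1 a)) /\
  (forall e, in_Pbar G h v e -> isotropic G h 3 e ->
     star_iso G h v e (A2aA1 0) \/
     exists a : nat, (a <= 9)%N /\ star_iso G h v e (aA1 a)).
Proof.
split; [|split; [|split]].
- move=> e Le.
  have V := p1_V Le.
  have uE : forall x y z w, Pst e x -> Pst e y -> Pst e z -> Pst e w -> lf x y = 1 -> lf z w = 1 ->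
      (z = x /\ w = y) \/ (z = y /\ w = x).
    move=> x y z w Px Py Pz Pw xy zw.
    have nxy := edge_neq Px xy; have nzw := edge_neq Pz zw.
    have yx : lf y x = 1 by rewrite lformC.
    have wz : lf w z = 1 by rewrite lformC.
    case: (eqVneq z x) => [E|/eqP zx].
      subst z; case: (eqVneq w y) => [->|/eqP wy]; first by left.
      by case: (V x y w Px Py Pw xy zw (fun E => wy (esym E))).
    case: (eqVneq z y) => [E|/eqP zy].
      subst z; case: (eqVneq w x) => [->|/eqP wx]; first by right.
      by case: (V y x w Py Px Pw yx zw (fun E => wx (esym E))).
    exfalso.
    case: (eqVneq w x) => [E|/eqP wx].
      subst w; have xz : lf x z = 1 by rewrite lformC.
      exact: (V x y z Px Py Pz xy xz (fun E => zy (esym E))).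
    case: (eqVneq w y) => [E|/eqP wy].
      subst w; have yz : lf y z = 1 by rewrite lformC.
      exact: (V y x z Py Px Pz yx yz (fun E => zx (esym E))).
    have xz : lf x z = 0.
      case: (star_pair Px Pz (fun E => zx (esym E))) => // B1.
      by case: (V x y z Px Py Pz xy B1 (fun E => zy (esym E))).
    have xw : lf x w = 0.
      case: (star_pair Px Pw (fun E => wx (esym E))) => // B1.
      by case: (V x y w Px Py Pw xy B1 (fun E => wy (esym E))).
    have yz : lf y z = 0.
      case: (star_pair Py Pz (fun E => zy (esym E))) => // B1.
      by case: (V y x z Py Px Pz yx B1 (fun E => zx (esym E))).
    have yw : lf y w = 0.
      case: (star_pair Py Pw (fun E => wy (esym E))) => // B1.
      by case: (V y x w Py Px Pw yx B1 (fun E => wx (esym E))).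
    exact: (p1_disj Le Px Py Pz Pw xy zw xz xw yz yw).
  exact: (@star_enum _ (Pst e) lf (lformC sG) (@star_self e) (@star_pair e) uE 8 3
            (p1_bound0 Le) (p1_bound1 Le)).
- move=> [_ adm3] e [[ee eh] _].
  apply: noedge_aA1; first exact: p2_noedge.
  exact: p2_bound0.
- move=> e [[[ee eh] _] _].
  apply: noedge_aA1; first exact: p3_noedge.
  exact: p3_bound0.
- move=> e [_ [_ [Ne _]]] [ee eh].
  have T3 := p4_third ee eh Ne.
  have uE : forall x y z w, Pst e x -> Pst e y -> Pst e z -> Pst e w -> lf x y = 1 -> lf z w = 1 ->
      (z = x /\ w = y) \/ (z = y /\ w = x).
    move=> x y z w Px Py Pz Pw xy zw.
    have nzw := edge_neq Pz zw.
    case: (eqVneq z x) => [E|/eqP zx].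
      subst z; case: (eqVneq w y) => [->|/eqP wy]; first by left.
      by case: (T3 x y w Px Py Pw xy (fun E => nzw (esym E)) wy).
    case: (eqVneq z y) => [E|/eqP zy].
      subst z; case: (eqVneq w x) => [->|/eqP wx]; first by right.
      by case: (T3 x y w Px Py Pw xy wx (fun E => nzw (esym E))).
    by case: (T3 x y z Px Py Pz xy zx zy).
  have b1 : forall x y s, Pst e x -> Pst e y -> lf x y = 1 -> uniq s ->
      (forall z, z \in s -> Pst e z /\ z <> x /\ z <> y) ->
      (forall z w, z \in s -> w \in s -> z <> w -> lf z w = 0) ->
      (forall z, z \in s -> lf x z = 0 /\ lf y z = 0) -> (size s <= 0)%N.
    move=> x y [|z s] Px Py xy _ Ps _ _ //.
    have [Pz [zx zy]] := Ps z (mem_head _ _).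
    by case: (T3 x y z Px Py Pz xy zx zy).
  case: (@star_enum _ (Pst e) lf (lformC sG) (@star_self e) (@star_pair e) uE 9 0
            (p4_bound0 ee eh) b1) => [[a [a0 I]]|R]; last by right.
  by left; move: a0 I; rewrite leqn0 => /eqP ->.
Qed.
End Geo.

Theorem lemma5p1 (n : nat) (G : 'M[int]_n) (h : 'cV[int]_n) (v : 'cV[rat]_n) :
  even_lattice G -> hyperbolic G -> lform G h h = 8 ->
  two_admissible G h -> weyl_generic G h v ->
  (* (1) *)
  (forall e, is_line G h v e ->
     (exists a : nat, (a <= 3)%N /\ star_iso G h v e (A2aA1 a)) \/
     (exists a : nat, (a <= 8)%N /\ star_iso G h v e (aA1 a))) /\
  (* (2) *)
  (three_admissible G h -> forall e, is_line G h v e ->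
     exists a : nat, (a <= 7)%N /\ star_iso G h v e (aA1 a)) /\
  (* (3) *)
  (forall e, simple_root G h v e ->
     exists a : nat, (a <= 5)%N /\ star_iso G h v e (aA1 a)) /\
  (* (4) *)
  (forall e, in_Pbar G h v e -> isotropic G h 3 e ->
     star_iso G h v e (A2aA1 0) \/
     exists a : nat, (a <= 9)%N /\ star_iso G h v e (aA1 a)).
Proof.
move=> [sG _] hyp hh adm wg.
exact: (all_parts sG hyp hh adm wg).
Qed.
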